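(* Let $A$ be an associative unital algebra and $(H,\pi_l,\pi_r,\psi_l,\psi_r)$ an L-R-twisting datum for $A$. Then $A$ with the product $a\bullet b=(a_{[0]}\cdot b_{<1>})(a_{[-1]}\cdot b_{<0>})$ and the original unit $1$ is an associative unital algebra.
   Context: Work over a field $k$; $H$ an ordinary bialgebra, $\Delta(h)=h_1\otimes h_2$. An L-R-twisting datum for an algebra $A$ is a bialgebra $H$ together with: (i) an $H$-bimodule algebra structure on $A$, i.e. actions $\pi_l(h\otimes a)=h\cdot a$, $\pi_r(a\otimes h)=a\cdot h$ making $A$ an $H$-bimodule with $h\cdot(ab)=(h_1\cdot a)(h_2\cdot b)$, $(ab)\cdot h=(a\cdot h_1)(b\cdot h_2)$, $h\cdot1=1\cdot h=\varepsilon(h)1$; (ii) an $H$-bicomodule algebra structure on $A$, i.e. algebra maps $\psi_l(a)=a_{[-1]}\otimes a_{[0]}$, $\psi_r(a)=a_{<0>}\otimes a_{<1>}$ making $A$ an $H$-bicomodule; (iii) for all $h\in H$, $a\in A$: $(h\cdot a)_{[-1]}\otimes(h\cdot a)_{[0]}=a_{[-1]}\otimes h\cdot a_{[0]}$, $(h\cdot a)_{<0>}\otimes(h\cdot a)_{<1>}=h\cdot a_{<0>}\otimes a_{<1>}$, $(a\cdot h)_{[-1]}\otimes(a\cdot h)_{[0]}=a_{[-1]}\otimes a_{[0]}\cdot h$, $(a\cdot h)_{<0>}\otimes(a\cdot h)_{<1>}=a_{<0>}\cdot h\otimes a_{<1>}$. *)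

(* Defs.v *)
(* Tensor products are not in MathComp: an element of
   U (x) V is represented by a finite list of pairs (a finite sum of pure
   tensors), and equality of tensors is defined by the universal property:
   two such sums are equal iff every bilinear map into every k-vector space
   takes the same value on them. *)
From HB Require Import structures.
From mathcomp Require Import all_boot all_order all_algebra.
Set Implicit Arguments. Unset Strict Implicit. Unset Printing Implicit Defensive.
Import GRing.Theory.
Local Open Scope ring_scope.

Section Tensors.
Variable k : fieldType.

Definition bilin (U V W : lmodType k) (f : U -> V -> W) : Prop :=
  (forall (c : k) u u' v, f (c *: u + u') v = c *: f u v + f u' v) /\
  (forall (c : k) u v v', f u (c *: v + v') = c *: f u v + f u v').

Definition trilin (U V X W : lmodType k) (f : U -> V -> X -> W) : Prop :=
  (forall (c : k) u u' v x, f (c *: u + u') v x = c *: f u v x + f u' v x) /\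
  (forall (c : k) u v v' x, f u (c *: v + v') x = c *: f u v x + f u v' x) /\
  (forall (c : k) u v x x', f u v (c *: x + x') = c *: f u v x + f u v x').

Definition teq2 (U V : lmodType k) (t1 t2 : seq (U * V)) : Prop :=
  forall (W : lmodType k) (f : U -> V -> W), bilin f ->
    \sum_(p <- t1) f p.1 p.2 = \sum_(p <- t2) f p.1 p.2.

Definition teq3 (U V X : lmodType k) (t1 t2 : seq (U * V * X)) : Prop :=
  forall (W : lmodType k) (f : U -> V -> X -> W), trilin f ->
    \sum_(p <- t1) f p.1.1 p.1.2 p.2 = \sum_(p <- t2) f p.1.1 p.1.2 p.2.

End Tensors.

Record is_bialgebra (k : fieldType) (H : algType k)
    (Delta : H -> seq (H * H)) (eps : H -> k) : Prop := {
  bialg_Delta_lin : forall (c : k) h g,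
    teq2 (Delta (c *: h + g)) ([seq (c *: p.1, p.2) | p <- Delta h] ++ Delta g);
  bialg_eps_lin : forall (c : k) h g, eps (c *: h + g) = c * eps h + eps g;
  bialg_coassoc : forall h,
    teq3 [seq (q.1, q.2, p.2) | p <- Delta h, q <- Delta p.1]
         [seq (p.1, q.1, q.2) | p <- Delta h, q <- Delta p.2];
  bialg_counitl : forall h, \sum_(p <- Delta h) eps p.1 *: p.2 = h;
  bialg_counitr : forall h, \sum_(p <- Delta h) eps p.2 *: p.1 = h;
  bialg_Delta_mul : forall h g,
    teq2 (Delta (h * g)) [seq (p.1 * q.1, p.2 * q.2) | p <- Delta h, q <- Delta g];
  bialg_Delta_1 : teq2 (Delta 1) [:: (1, 1)];
  bialg_eps_mul : forall h g, eps (h * g) = eps h * eps g;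
  bialg_eps_1 : eps 1 = 1
}.

(* (i) A is an H-bimodule algebra via pil (h . a) and pir (a . h) *)
Record is_bimodule_algebra (k : fieldType) (H A : algType k)
    (Delta : H -> seq (H * H)) (eps : H -> k)
    (pil : H -> A -> A) (pir : A -> H -> A) : Prop := {
  bma_pil_bilin : bilin pil;
  bma_pir_bilin : bilin pir;
  bma_pil_mul : forall h g a, pil (h * g) a = pil h (pil g a);
  bma_pil_1 : forall a, pil 1 a = a;
  bma_pir_mul : forall a h g, pir a (h * g) = pir (pir a h) g;
  bma_pir_1 : forall a, pir a 1 = a;
  bma_bimod : forall h a g, pil h (pir a g) = pir (pil h a) g;
  bma_pil_alg : forall h a b,
    pil h (a * b) = \sum_(p <- Delta h) pil p.1 a * pil p.2 b;
  bma_pir_alg : forall a b h,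
    pir (a * b) h = \sum_(p <- Delta h) pir a p.1 * pir b p.2;
  bma_pil_unit : forall h, pil h 1 = eps h *: 1;
  bma_pir_unit : forall h, pir 1 h = eps h *: 1
}.

(* (ii) A is an H-bicomodule algebra via psil (a_[-1] (x) a_[0]) and
   psir (a_<0> (x) a_<1>) *)
Record is_bicomodule_algebra (k : fieldType) (H A : algType k)
    (Delta : H -> seq (H * H)) (eps : H -> k)
    (psil : A -> seq (H * A)) (psir : A -> seq (A * H)) : Prop := {
  bca_psil_lin : forall (c : k) a b,
    teq2 (psil (c *: a + b)) ([seq (c *: p.1, p.2) | p <- psil a] ++ psil b);
  bca_psir_lin : forall (c : k) a b,
    teq2 (psir (c *: a + b)) ([seq (c *: p.1, p.2) | p <- psir a] ++ psir b);
  bca_psil_coassoc : forall a,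
    teq3 [seq (q.1, q.2, p.2) | p <- psil a, q <- Delta p.1]
         [seq (p.1, q.1, q.2) | p <- psil a, q <- psil p.2];
  bca_psil_counit : forall a, \sum_(p <- psil a) eps p.1 *: p.2 = a;
  bca_psir_coassoc : forall a,
    teq3 [seq (q.1, q.2, p.2) | p <- psir a, q <- psir p.1]
         [seq (p.1, q.1, q.2) | p <- psir a, q <- Delta p.2];
  bca_psir_counit : forall a, \sum_(p <- psir a) eps p.2 *: p.1 = a;
  bca_bicomod : forall a,
    teq3 [seq (q.1, q.2, p.2) | p <- psir a, q <- psil p.1]
         [seq (p.1, q.1, q.2) | p <- psil a, q <- psir p.2];
  bca_psil_mul : forall a b,
    teq2 (psil (a * b)) [seq (p.1 * q.1, p.2 * q.2) | p <- psil a, q <- psil b];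
  bca_psil_1 : teq2 (psil 1) [:: (1, 1)];
  bca_psir_mul : forall a b,
    teq2 (psir (a * b)) [seq (p.1 * q.1, p.2 * q.2) | p <- psir a, q <- psir b];
  bca_psir_1 : teq2 (psir 1) [:: (1, 1)]
}.

Record LR_twisting_datum (k : fieldType) (H A : algType k)
    (Delta : H -> seq (H * H)) (eps : H -> k)
    (pil : H -> A -> A) (pir : A -> H -> A)
    (psil : A -> seq (H * A)) (psir : A -> seq (A * H)) : Prop := {
  lr_bialg : is_bialgebra Delta eps;
  lr_bimod : is_bimodule_algebra Delta eps pil pir;
  lr_bicomod : is_bicomodule_algebra Delta eps psil psir;
  lr_psil_pil : forall h a,
    teq2 (psil (pil h a)) [seq (p.1, pil h p.2) | p <- psil a];
  lr_psir_pil : forall h a,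
    teq2 (psir (pil h a)) [seq (pil h p.1, p.2) | p <- psir a];
  lr_psil_pir : forall a h,
    teq2 (psil (pir a h)) [seq (p.1, pir p.2 h) | p <- psil a];
  lr_psir_pir : forall a h,
    teq2 (psir (pir a h)) [seq (pir p.1 h, p.2) | p <- psir a]
}.

Definition LR_prod (k : fieldType) (H A : algType k)
    (pil : H -> A -> A) (pir : A -> H -> A)
    (psil : A -> seq (H * A)) (psir : A -> seq (A * H)) (a b : A) : A :=
  \sum_(p <- psil a) \sum_(q <- psir b) pir p.2 q.2 * pil p.1 q.1.

(* Main.v *)
Set Warnings "-notation-overridden -ambiguous-paths".
Require Import Defs.
From HB Require Import structures.
From mathcomp Require Import all_boot all_order all_algebra.
Import GRing.Theory.
Local Open Scope ring_scope.
Set Implicit Arguments. Unset Strict Implicit.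

Definition lin (k : fieldType) (U W : lmodType k) (f : U -> W) : Prop :=
  forall (c : k) u v, f (c *: u + v) = c *: f u + f v.

Lemma lin0 (k : fieldType) (U W : lmodType k) (f : U -> W) : lin f -> f 0 = 0.
Proof.
move=> Hf; have E := Hf 1 0 0; rewrite !scale1r addr0 in E.
by apply: (addrI (f 0)); rewrite addr0 -E.
Qed.

Lemma linZ (k : fieldType) (U W : lmodType k) (f : U -> W) c u :
  lin f -> f (c *: u) = c *: f u.
Proof. by move=> Hf; have := Hf c u 0; rewrite addr0 (lin0 Hf) addr0. Qed.

Lemma linD (k : fieldType) (U W : lmodType k) (f : U -> W) u v :
  lin f -> f (u + v) = f u + f v.
Proof. by move=> Hf; have := Hf 1 u v; rewrite !scale1r. Qed.

Lemma lin_big (k : fieldType) (U W : lmodType k) (f : U -> W) I (s : seq I) F :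
  lin f -> f (\sum_(i <- s) F i) = \sum_(i <- s) f (F i).
Proof.
move=> Hf; elim: s => [|i s IH]; first by rewrite !big_nil (lin0 Hf).
by rewrite !big_cons (linD _ _ Hf) IH.
Qed.

Lemma lin_id (k : fieldType) (U : lmodType k) : lin (fun u : U => u).
Proof. by []. Qed.

Lemma lin_sum (k : fieldType) (U W : lmodType k) I (s : seq I) (F : U -> I -> W) :
  (forall i, lin (fun u => F u i)) -> lin (fun u => \sum_(i <- s) F u i).
Proof.
move=> HF c u v; rewrite scaler_sumr -big_split; apply: eq_bigr => i _.
exact: HF.
Qed.

Lemma lin_mull (k : fieldType) (U : lmodType k) (R : algType k) (g : U -> R) y :
  lin g -> lin (fun u => g u * y).
Proof. by move=> Hg c u v /=; rewrite Hg mulrDl scalerAl. Qed.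

Lemma lin_mulr (k : fieldType) (U : lmodType k) (R : algType k) (g : U -> R) y :
  lin g -> lin (fun u => y * g u).
Proof. by move=> Hg c u v /=; rewrite Hg mulrDr scalerAr. Qed.

Lemma lin_bil1 (k : fieldType) (U X Y W : lmodType k) (f : X -> Y -> W) (g : U -> X) y :
  bilin f -> lin g -> lin (fun u => f (g u) y).
Proof. by move=> [H1 _] Hg c u v /=; rewrite Hg H1. Qed.

Lemma lin_bil2 (k : fieldType) (U X Y W : lmodType k) (f : X -> Y -> W) (g : U -> Y) x :
  bilin f -> lin g -> lin (fun u => f x (g u)).
Proof. by move=> [_ H2] Hg c u v /=; rewrite Hg H2. Qed.

Lemma bilin_of (k : fieldType) (X Y W : lmodType k) (f : X -> Y -> W) :
  (forall y, lin (fun x => f x y)) -> (forall x, lin (fun y => f x y)) -> bilin f.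
Proof. by move=> H1 H2; split=> c u u' v; [apply: (H1 v) | apply: (H2 u)]. Qed.

Lemma trilin_of (k : fieldType) (X Y Z W : lmodType k) (f : X -> Y -> Z -> W) :
  (forall y z, lin (fun x => f x y z)) -> (forall x z, lin (fun y => f x y z)) ->
  (forall x y, lin (fun z => f x y z)) -> trilin f.
Proof.
move=> H1 H2 H3; split; first by move=> c u u' v x; exact: (H1 v x c u u').
split; first by move=> c u v v' x; exact: (H2 u x c v v').
by move=> c u v x x'; exact: (H3 u v c x x').
Qed.

Lemma lin_S (k : fieldType) (U X Y W : lmodType k) (ps : U -> seq (X * Y))
  (f : X -> Y -> W) :
  (forall c a b, teq2 (ps (c *: a + b)) ([seq (c *: p.1, p.2) | p <- ps a] ++ ps b)) ->
  bilin f -> lin (fun u => \sum_(p <- ps u) f p.1 p.2).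
Proof.
move=> Hps Hf c a b; rewrite (Hps c a b _ f Hf) big_cat big_map /= scaler_sumr.
congr (_ + _); apply: eq_bigr => p _.
by apply: (@linZ _ _ _ (fun x => f x p.2)) => d u v; case: Hf => H1 _; rewrite H1.
Qed.

Lemma S_big (k : fieldType) (U X Y W : lmodType k) (ps : U -> seq (X * Y))
  (f : X -> Y -> W) I (s : seq I) (F : I -> U) :
  (forall c a b, teq2 (ps (c *: a + b)) ([seq (c *: p.1, p.2) | p <- ps a] ++ ps b)) ->
  bilin f ->
  \sum_(p <- ps (\sum_(i <- s) F i)) f p.1 p.2 = \sum_(i <- s) \sum_(p <- ps (F i)) f p.1 p.2.
Proof.
move=> Hps Hf.
exact: (lin_big _ _ (lin_S Hps Hf)).
Qed.

Lemma S_mul (k : fieldType) (U X Y : algType k) (W : lmodType k) (ps : U -> seq (X * Y))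
  (f : X -> Y -> W) x y :
  teq2 (ps (x * y)) [seq (p.1 * q.1, p.2 * q.2) | p <- ps x, q <- ps y] ->
  bilin f ->
  \sum_(p <- ps (x * y)) f p.1 p.2 = \sum_(p <- ps x) \sum_(q <- ps y) f (p.1 * q.1) (p.2 * q.2).
Proof. by move=> E Hf; rewrite (E _ f Hf) big_allpairs_dep. Qed.

Ltac lin_tac pilB pirB :=
  repeat first [ exact: lin_id | apply: lin_sum => ? | apply: lin_mull | apply: lin_mulr
               | apply: (lin_bil1 _ pilB) | apply: (lin_bil2 _ pilB)
               | apply: (lin_bil1 _ pirB) | apply: (lin_bil2 _ pirB) ].

Lemma assoc_part (k : fieldType) (H A : algType k)
    (Delta : H -> seq (H * H)) (eps : H -> k)
    (pil : H -> A -> A) (pir : A -> H -> A)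
    (psil : A -> seq (H * A)) (psir : A -> seq (A * H)) :
  LR_twisting_datum Delta eps pil pir psil psir ->
  associative (LR_prod pil pir psil psir).
Proof.
move=> [_ [pilB pirB pil_mul pil_1 pir_mul pir_1 bimod pil_alg pir_alg pil_u pir_u]
  [psil_lin psir_lin psil_co psil_cu psir_co psir_cu bicom psil_mul psil_1 psir_mul psir_1]
  lpl lrl lpr lrr] a b c.
rewrite /LR_prod.
pose C := \sum_(p <- psil a) \sum_(e <- Delta p.1) \sum_(w <- psil b) \sum_(z <- psir w.2)
   \sum_(Q <- psir c) \sum_(y <- psir Q.1)
   pir p.2 (z.2 * y.2) * (pil e.1 (pir z.1 Q.2) * pil e.2 (pil w.1 y.1)).
have RR : \sum_(p <- psil a) \sum_(q <- psir (\sum_(p0 <- psil b)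
        \sum_(q0 <- psir c) pir p0.2 q0.2 * pil p0.1 q0.1)) pir p.2 q.2 * pil p.1 q.1 = C.
  apply: eq_bigr => p _.
  have fB : bilin (fun x g => pir p.2 g * pil p.1 x).
    by apply: bilin_of => *; lin_tac pilB pirB.
  rewrite (S_big _ _ psir_lin fB).
  under eq_bigr => w _ do rewrite (S_big _ _ psir_lin fB).
  under eq_bigr => w _ do under eq_bigr => Q _ do rewrite (S_mul (psir_mul _ _) fB).
  transitivity (\sum_(w <- psil b) \sum_(Q <- psir c) \sum_(z <- psir w.2) \sum_(y <- psir Q.1)
     \sum_(e <- Delta p.1)
     pir p.2 (z.2 * y.2) * (pil e.1 (pir z.1 Q.2) * pil e.2 (pil w.1 y.1))).
    apply: eq_bigr => w _; apply: eq_bigr => Q _.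
    rewrite (lrr _ _ _ (fun x h => \sum_(y <- psir (pil w.1 Q.1)) pir p.2 (h * y.2) * pil p.1 (x * y.1))); last first.
      by apply: bilin_of => *; lin_tac pilB pirB.
    rewrite big_map; apply: eq_bigr => z _ /=.
    rewrite (lrl _ _ _ (fun x h => pir p.2 (z.2 * h) * pil p.1 (pir z.1 Q.2 * x))); last first.
      by apply: bilin_of => *; lin_tac pilB pirB.
    rewrite big_map; apply: eq_bigr => y _ /=.
    by rewrite pil_alg mulr_sumr.
  under eq_bigr => w _ do under eq_bigr => Q _ do under eq_bigr => z _ do rewrite exchange_big.
  under eq_bigr => w _ do under eq_bigr => Q _ do rewrite exchange_big.
  under eq_bigr => w _ do rewrite exchange_big.
  rewrite exchange_big; apply: eq_bigr => e _; apply: eq_bigr => w _.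
  by rewrite exchange_big.
have FB : bilin (fun h x => \sum_(Q <- psir c) pir x Q.2 * pil h Q.1).
  by apply: bilin_of => *; lin_tac pilB pirB.
rewrite RR (S_big _ _ psil_lin FB).
under eq_bigr => p _ do rewrite (S_big _ _ psil_lin FB).
under eq_bigr => p _ do under eq_bigr => q _ do rewrite (S_mul (psil_mul _ _) FB).
transitivity (\sum_(p <- psil a) \sum_(q <- psir b) \sum_(u <- psil p.2) \sum_(v <- psil q.1)
   \sum_(Q <- psir c) \sum_(d <- Delta Q.2)
   (pir u.2 (q.2 * d.1) * pil p.1 (pir v.2 d.2)) * pil u.1 (pil v.1 Q.1)); last first.
  apply: eq_bigr => p _; apply: eq_bigr => q _.
  rewrite (lpr _ _ _ (fun h x => \sum_(v <- psil (pil p.1 q.1)) \sum_(Q <- psir c)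
     pir (x * v.2) Q.2 * pil (h * v.1) Q.1)); last first.
    by apply: bilin_of => *; lin_tac pilB pirB.
  rewrite big_map; apply: eq_bigr => u _ /=.
  rewrite (lpl _ _ _ (fun h x => \sum_(Q <- psir c) pir (pir u.2 q.2 * x) Q.2 * pil (u.1 * h) Q.1)); last first.
    by apply: bilin_of => *; lin_tac pilB pirB.
  rewrite big_map; apply: eq_bigr => v _ /=; apply: eq_bigr => Q _.
  rewrite pir_alg pil_mul mulr_suml; apply: eq_bigr => d _.
  by rewrite -pir_mul bimod.
symmetry.
transitivity (\sum_(p <- psil a) \sum_(q <- psir b) \sum_(u <- psil p.2) \sum_(v <- psil q.1)
   \sum_(Q <- psir c) \sum_(y <- psir Q.1)
   (pir u.2 (q.2 * y.2) * pil p.1 (pir v.2 Q.2)) * pil u.1 (pil v.1 y.1)).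
  apply: eq_bigr => p _; apply: eq_bigr => q _; apply: eq_bigr => u _; apply: eq_bigr => v _.
  have E := psir_co c _ (fun x h h' => (pir u.2 (q.2 * h) * pil p.1 (pir v.2 h')) * pil u.1 (pil v.1 x)).
  rewrite !big_allpairs_dep /= in E.
  by rewrite E //; apply: trilin_of => *; lin_tac pilB pirB.
under eq_bigr => p _ do rewrite exchange_big.
transitivity (\sum_(p <- psil a) \sum_(u <- psil p.2) \sum_(w <- psil b) \sum_(z <- psir w.2)
   \sum_(Q <- psir c) \sum_(y <- psir Q.1)
   (pir u.2 (z.2 * y.2) * pil p.1 (pir z.1 Q.2)) * pil u.1 (pil w.1 y.1)).
  apply: eq_bigr => p _; apply: eq_bigr => u _.
  have E := bicom b _ (fun h x h2 => \sum_(Q <- psir c) \sum_(y <- psir Q.1)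
      (pir u.2 (h2 * y.2) * pil p.1 (pir x Q.2)) * pil u.1 (pil h y.1)).
  rewrite !big_allpairs_dep /= in E.
  by rewrite E //; apply: trilin_of => *; lin_tac pilB pirB.
transitivity (\sum_(p <- psil a) \sum_(e <- Delta p.1) \sum_(w <- psil b) \sum_(z <- psir w.2)
   \sum_(Q <- psir c) \sum_(y <- psir Q.1)
   (pir p.2 (z.2 * y.2) * pil e.1 (pir z.1 Q.2)) * pil e.2 (pil w.1 y.1)).
  have E := psil_co a _ (fun h1 h2 x => \sum_(w <- psil b) \sum_(z <- psir w.2)
   \sum_(Q <- psir c) \sum_(y <- psir Q.1)
   (pir x (z.2 * y.2) * pil h1 (pir z.1 Q.2)) * pil h2 (pil w.1 y.1)).
  rewrite !big_allpairs_dep /= in E.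
  by rewrite E //; apply: trilin_of => *; lin_tac pilB pirB.
rewrite /C; do 6 (apply: eq_bigr => ? _).
by rewrite mulrA.
Qed.

Unset Implicit Arguments.

Theorem proposition4p2 (k : fieldType) (H A : algType k)
    (Delta : H -> seq (H * H)) (eps : H -> k)
    (pil : H -> A -> A) (pir : A -> H -> A)
    (psil : A -> seq (H * A)) (psir : A -> seq (A * H)) :
  LR_twisting_datum Delta eps pil pir psil psir ->
  let bullet := LR_prod pil pir psil psir in
  bilin (bullet : A -> A -> A) /\
  associative bullet /\ left_id 1 bullet /\ right_id 1 bullet.
Proof.
move=> D; have AS := assoc_part D; move: D.
move=> [_ [pilB pirB pil_mul pil_1 pir_mul pir_1 bimod pil_alg pir_alg pil_u pir_u]
  [psil_lin psir_lin psil_co psil_cu psir_co psir_cu bicom psil_mul psil_1 psir_mul psir_1]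
  lpl lrl lpr lrr] bullet.
split; last split.
- rewrite /bullet /LR_prod.
  apply: bilin_of => [b|a].
    apply: (lin_S (f := fun h x => \sum_(q <- psir b) pir x q.2 * pil h q.1) psil_lin).
    by apply: bilin_of => *; lin_tac pilB pirB.
  apply: lin_sum => p.
  apply: (lin_S (f := fun x g => pir p.2 g * pil p.1 x) psir_lin).
  by apply: bilin_of => *; lin_tac pilB pirB.
- exact: AS.
- rewrite /bullet /LR_prod.
  split.
    move=> b.
    rewrite (psil_1 _ (fun h x => \sum_(q <- psir b) pir x q.2 * pil h q.1)); last first.
      by apply: bilin_of => *; lin_tac pilB pirB.
    rewrite big_seq1 /= -[RHS]psir_cu; apply: eq_bigr => q _.
    by rewrite pir_u pil_1 -scalerAl mul1r.
  move=> a.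
  transitivity (\sum_(p <- psil a) pir p.2 1 * pil p.1 1).
    apply: eq_bigr => p _; rewrite (psir_1 _ (fun x g => pir p.2 g * pil p.1 x)) ?big_seq1 //.
    by apply: bilin_of => *; lin_tac pilB pirB.
  rewrite -[RHS]psil_cu; apply: eq_bigr => p _.
  by rewrite pir_1 pil_u -scalerAr mulr1.
Qed.
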